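(* Let $\zeta>1$. If a distribution $\mu$ over $\{-1,+1\}^n$ is $\zeta$-marginally stable, then for every $\alpha\in(0,1)$, every $x\in\mathbb R^n_{>0}$ and every $i\in[n]$ with $x_i\ge(2\zeta)^{1/(1-\alpha)}$, $$\frac{\partial F_{\mu,\alpha}}{\partial z_i}\Big|_{z=x}\le0,$$ where $F_{\mu,\alpha}(z)=\dfrac{g_\mu(z_1^\alpha,\dots,z_n^\alpha)^{1/\alpha}}{\prod_{j=1}^n(\mu_j(+1)z_j+\mu_j(-1))}$.
   Context: $g_\mu(z)=\sum_\sigma\mu(\sigma)\prod_{j:\sigma_j=+1}z_j$; $\mu_j$ marginal at coordinate $j$; $\Omega(\cdot)$ support; $\mu_\Lambda$ marginal on $\Lambda$; $\mu^\sigma$ conditional on $\sigma\in\Omega(\mu_\Lambda)$. $\zeta$-marginal stability: for every $i\in[n]$, every $S\subseteq\Lambda\subseteq[n]\setminus\{i\}$, and every $\sigma\in\Omega(\mu_\Lambda)$, $R_i^\sigma\le\zeta$ and $R_i^\sigma\le\zeta R_i^{\sigma_S}$, where $R_i^\sigma=\mu_i^\sigma(+1)/\mu_i^\sigma(-1)$. *)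

(* Defs.v *)
From HB Require Import structures.
From mathcomp Require Import all_boot all_order all_algebra.
From mathcomp Require Import all_classical all_reals all_analysis.
Set Implicit Arguments. Unset Strict Implicit. Unset Printing Implicit Defensive.
Import Order.TTheory GRing.Theory Num.Theory.
Import numFieldNormedType.Exports.
Local Open Scope ring_scope.

(* A configuration in {-1,+1}^n: sigma j = true encodes sigma_j = +1,
   sigma j = false encodes sigma_j = -1. *)
Definition config (n : nat) := {ffun 'I_n -> bool}.

Section Defs.
Variables (R : realType) (n : nat).

Definition is_distribution (mu : config n -> R) : Prop :=
  (forall s, 0 <= mu s) /\ \sum_(s : config n) mu s = 1.

Definition agree (L : {set 'I_n}) (sigma tau : config n) : bool :=
  [forall j in L, tau j == sigma j].

Definition marg (mu : config n -> R) (L : {set 'I_n}) (sigma : config n) : R :=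
  \sum_(tau : config n | agree L sigma tau) mu tau.

Definition in_support (mu : config n -> R) (L : {set 'I_n}) (sigma : config n) : Prop :=
  0 < marg mu L sigma.

Definition cond_marg (mu : config n -> R) (L : {set 'I_n}) (sigma : config n)
    (i : 'I_n) (b : bool) : R :=
  (\sum_(tau : config n | agree L sigma tau && (tau i == b)) mu tau) / marg mu L sigma.

(* The ratio R_i^sigma = mu_i^sigma(+1)/mu_i^sigma(-1)
   takes values in [0, +oo]; the inequalities R_i^sigma <= zeta and
   R_i^sigma <= zeta R_i^{sigma_S} are written in cross-multiplied form,
   which is exactly their meaning including the value +oo. *)
Definition marginally_stable (zeta : R) (mu : config n -> R) : Prop :=
  forall (i : 'I_n) (S L : {set 'I_n}) (sigma : config n),
    S \subset L -> i \notin L -> in_support mu L sigma ->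
      cond_marg mu L sigma i true <= zeta * cond_marg mu L sigma i false /\
      cond_marg mu L sigma i true * cond_marg mu S sigma i false
        <= zeta * (cond_marg mu S sigma i true * cond_marg mu L sigma i false).

Definition gen_poly (mu : config n -> R) (z : 'I_n -> R) : R :=
  \sum_(s : config n) mu s * \prod_(j < n | s j) z j.

Definition marg1 (mu : config n -> R) (j : 'I_n) (b : bool) : R :=
  \sum_(s : config n | s j == b) mu s.

Definition Fma (mu : config n -> R) (alpha : R) (z : 'I_n -> R) : R :=
  powR (gen_poly mu (fun j => powR (z j) alpha)) alpha^-1 /
  \prod_(j < n) (marg1 mu j true * z j + marg1 mu j false).

Definition upd (z : 'I_n -> R) (i : 'I_n) (t : R) : 'I_n -> R :=
  fun j => if j == i then t else z j.

End Defs.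

(* Main.v *)
Require Import Defs.
From HB Require Import structures.
From mathcomp Require Import all_boot all_order all_algebra.
From mathcomp Require Import all_classical all_reals all_analysis.
From mathcomp Require Import lra ring.
Import Order.TTheory GRing.Theory Num.Theory.
Import numFieldNormedType.Exports.
Local Open Scope ring_scope.

Section S.
Variable R : realType.

Lemma is_derive1_comp (f g : R -> R) (x df dg : R) :
  is_derive x 1 f df -> is_derive (f x) 1 g dg ->
  is_derive x 1 (g \o f) (dg * df).
Proof.
move=> [Df Ef] [Dg Eg]; split.
  apply/derivable1_diffP/differentiable_comp; exact/derivable1_diffP.
by rewrite -derive1E derive1_comp // !derive1E Ef Eg.
Qed.

Arguments is_derive1_comp {f g x df dg}.

Lemma deriv_main (A B C p q al x0 : R) :
  0 < al -> 0 < x0 -> 0 < A + powR x0 al * B -> 0 < (p * x0 + q) * C ->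
  is_derive x0 1 (fun t => powR (A + powR t al * B) al^-1 / ((p * t + q) * C))
   (powR (A + powR x0 al * B) al^-1 * (- ((p * x0 + q) * C) ^-2 * (p * C))
    + ((p * x0 + q) * C)^-1 * (al^-1 * powR (A + powR x0 al * B) (al^-1 - 1) *
        ((al * powR x0 (al - 1)) * B))).
Proof.
move=> al0 x00 G0 D0.
have dP : is_derive x0 1 (fun t => A + powR t al * B) ((al * powR x0 (al - 1)) * B).
  have -> : (fun t => A + powR t al * B) = cst A + ((fun t => powR t al) * cst B).
    by apply/funext.
  apply: is_derive_eq.
    apply: is_deriveD.
    apply: is_deriveM; exact: is_derive1_powR.
  by rewrite scaler0 add0r add0r /cst /GRing.scale /= mulrC.
have dG : is_derive x0 1 (fun t => powR (A + powR t al * B) al^-1)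
   (al^-1 * powR (A + powR x0 al * B) (al^-1 - 1) * ((al * powR x0 (al - 1)) * B)).
  have := is_derive1_comp dP (is_derive1_powR al^-1 G0). exact.
have dD : is_derive x0 1 (fun t => (p * t + q) * C) (p * C).
  have d1 : is_derive x0 1 (fun t : R => p * t) (p * 1).
    exact: is_deriveZ.
  have d2 : is_derive x0 1 ((fun t : R => p * t) + cst q) (p * 1 + 0).
    exact: is_deriveD.
  have d3 := is_deriveM d2 (is_derive_cst C x0 1).
  have -> : (fun t => (p * t + q) * C) = ((fun t : R => p * t) + cst q) * cst C.
    by apply/funext.
  apply: (is_derive_eq d3).
  by rewrite /= scaler0 add0r addr0 /GRing.scale /= mulr1 mulrC.
have dV := @is_deriveV R (fun t => (p * t + q) * C) x0 (p * C) 1 (lt0r_neq0 D0) dD.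
have dM := is_deriveM dG dV.
apply: (is_derive_eq dM).
by rewrite /= /GRing.scale /=.
Qed.

Lemma sign_main (A B C p q al x0 zeta : R) :
  0 < al < 1 -> 0 < x0 -> 0 <= A -> 0 <= B -> 0 < C -> 0 <= p -> 0 <= q ->
  0 < A + powR x0 al * B -> 0 < (p * x0 + q) * C -> 1 < zeta ->
  B * q <= zeta * p * A ->
  powR (2 * zeta) (1 - al)^-1 <= x0 ->
  powR (A + powR x0 al * B) al^-1 * (- ((p * x0 + q) * C) ^-2 * (p * C))
    + ((p * x0 + q) * C)^-1 * (al^-1 * powR (A + powR x0 al * B) (al^-1 - 1) *
        ((al * powR x0 (al - 1)) * B)) <= 0.
Proof.
move=> /andP[al0 al1] x00 A0 B0 C0 p0 q0 G0 D0 z1 key hx.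
set g := A + powR x0 al * B.
set d := (p * x0 + q) * C.
set k := powR g (al^-1 - 1).
set u := powR x0 (al - 1).
have k0 : 0 < k by apply: powR_gt0.
have u0 : 0 <= u by apply: powR_ge0.
have hg : powR g al^-1 = k * g.
  rewrite /k -{1}(subrK 1 al^-1) powRD; last by rewrite (gt_eqF G0) implybT.
  by rewrite powRr1 // ltW.
have hx0 : powR x0 al = u * x0 by rewrite /u mulrC mulr_powRB1 // ltW.
have v2 : 2 * zeta <= powR x0 (1 - al).
  have h1 : 0 < 1 - al by rewrite subr_gt0.
  have := @ge0_ler_powR _ (1 - al) (ltW h1) (powR (2 * zeta) (1 - al)^-1) x0.
  rewrite !nnegrE => /(_ (powR_ge0 _ _) (ltW x00) hx).
  by rewrite -powRrM mulVf ?(gt_eqF h1) // powRr1 // ltW // mulr_gt0 // (lt_trans ltr01 z1).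
have uv : u * powR x0 (1 - al) = 1.
  by rewrite /u -(opprB 1 al) powRN mulVf // (gt_eqF (powR_gt0 _ x00)).
have uz : u * zeta <= 1.
  have : u * (2 * zeta) <= u * powR x0 (1 - al) by apply: ler_wpM2l.
  rewrite uv => h; have : 0 <= u * zeta by rewrite mulr_ge0 // ltW // (lt_trans ltr01 z1).
  lra.
have key2 : u * B * q <= A * p.
  have h1 : u * (B * q) <= u * (zeta * p * A) by apply: ler_wpM2l.
  have h2 : 0 <= p * A by apply: mulr_ge0.
  have h3 : (u * zeta) * (p * A) <= 1 * (p * A) by apply: ler_wpM2r.
  have -> : u * B * q = u * (B * q) by rewrite mulrA.
  have e1 : u * (zeta * p * A) = (u * zeta) * (p * A) by ring.
  rewrite mul1r in h3; rewrite -e1 in h3.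
  apply: (le_trans h1). rewrite [A * p]mulrC. exact: h3.
have -> : powR g al^-1 * (- d ^-2 * (p * C)) + d^-1 * (al^-1 * k * (al * u * B))
   = (k * C / d ^+ 2) * (u * B * q - A * p).
  have pq0 : 0 < p * x0 + q by move: D0; rewrite /d pmulr_lgt0.
  rewrite hg /g hx0 /d; field.
  by rewrite (gt_eqF C0) (gt_eqF pq0) (gt_eqF al0).
apply: mulr_ge0_le0; last by rewrite subr_le0.
apply: divr_ge0; last exact: sqr_ge0.
by apply: mulr_ge0; apply: ltW.
Qed.
End S.

Section Comb.
Variables (R : realType) (n : nat) (mu : config n -> R) (i : 'I_n) (x : 'I_n -> R) (al : R).

Definition Wc (s : config n) : R :=
  \prod_(j < n | j != i) (if s j then powR (x j) al else 1).
Definition Ac : R := \sum_(s : config n) (if s i then 0 else mu s * Wc s).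
Definition Bc : R := \sum_(s : config n) (if s i then mu s * Wc s else 0).
Definition Cc : R := \prod_(j < n | j != i) (marg1 mu j true * x j + marg1 mu j false).

Lemma gen_upd t : gen_poly mu (fun j => powR (upd x i t j) al) = Ac + powR t al * Bc.
Proof.
  rewrite /gen_poly /Ac /Bc mulr_sumr -big_split; apply: eq_bigr => s _.
  rewrite big_mkcond (bigD1 i) //= /upd eqxx.
  have -> : \prod_(j < n | j != i)
      (if s j then powR (if j == i then t else x j) al else 1) = Wc s.
    by apply: eq_bigr => j /negbTE ->.
  by case: (s i); ring.
Qed.

Lemma Fma_upd t : Fma mu al (upd x i t) =
  powR (Ac + powR t al * Bc) al^-1 / ((marg1 mu i true * t + marg1 mu i false) * Cc).
Proof.
rewrite /Fma gen_upd; congr (powR _ _ / _).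
rewrite (bigD1 i) //= /upd eqxx; congr (_ * _).
by apply: eq_bigr => j /negbTE ->.
Qed.

Lemma upd_id : upd x i (x i) = x.
Proof. by apply/funext => j; rewrite /upd; case: eqP => [->|]. Qed.

Definition flip (s : config n) : config n := [ffun j => if j == i then ~~ s j else s j].

Lemma flipK : involutive flip.
Proof. by move=> s; apply/ffunP => j; rewrite !ffunE; case: eqP => // _; rewrite negbK. Qed.

Lemma flip_i s : flip s i = ~~ s i.
Proof. by rewrite ffunE eqxx. Qed.

Lemma Wc_flip s : Wc (flip s) = Wc s.
Proof. by apply: eq_bigr => j /negbTE hj; rewrite ffunE hj. Qed.

Lemma Wc_ge0 s : Wc s >= 0.
Proof. by apply: prodr_ge0 => j _; case: (s j); rewrite ?powR_ge0. Qed.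

Hypothesis mu0 : forall s, 0 <= mu s.
Hypothesis mu1 : \sum_(s : config n) mu s = 1.

Lemma Ac_ge0 : 0 <= Ac.
Proof. by apply: sumr_ge0 => s _; case: (s i) => //; rewrite mulr_ge0 ?Wc_ge0. Qed.
Lemma Bc_ge0 : 0 <= Bc.
Proof. by apply: sumr_ge0 => s _; case: (s i) => //; rewrite mulr_ge0 ?Wc_ge0. Qed.

Lemma marg1_ge0 j b : 0 <= marg1 mu j b.
Proof. by apply: sumr_ge0. Qed.

Lemma marg1_sum j : marg1 mu j true + marg1 mu j false = 1.
Proof.
rewrite -mu1 (bigID (fun s : config n => s j)) /=; congr (_ + _).
  by apply: eq_bigl => s; rewrite eqb_id.
by apply: eq_bigl => s; rewrite eqbF_neg.
Qed.

Lemma lin_gt0 (a b y : R) : 0 <= a -> 0 <= b -> a + b = 1 -> 0 < y -> 0 < a * y + b.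
Proof.
move=> a0 b0 ab y0; have [bz|bp] := eqVneq b 0; first rewrite bz in ab *.
  by rewrite addr0; rewrite addr0 in ab; rewrite ab mul1r.
have bq : 0 < b by rewrite lt_def bp b0.
have : 0 <= a * y by rewrite mulr_ge0 // ltW.
lra.
Qed.

Hypothesis xpos : forall j, 0 < x j.

Lemma Cc_gt0 : 0 < Cc.
Proof. by apply: prodr_gt0 => j _; apply: lin_gt0; rewrite ?marg1_ge0 ?marg1_sum. Qed.

Lemma gen_gt0 : 0 < gen_poly mu (fun j => powR (x j) al).
Proof.
rewrite lt_def; apply/andP; split; last first.
  by apply: sumr_ge0 => s _; apply: mulr_ge0 => //; apply: prodr_ge0 => j _; apply: powR_ge0.
have Hn : forall s : config n, true -> 0 <= mu s * \prod_(j < n | s j) powR (x j) al.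
  by move=> s _; apply: mulr_ge0 => //; apply: prodr_ge0 => j _; apply: powR_ge0.
apply/eqP => /(psumr_eq0P Hn) H.
have : \sum_(s : config n) mu s = 0.
  apply: big1 => s _.
  have /eqP := H s isT.
  rewrite mulf_eq0 => /orP[/eqP //|/eqP]; move=> h; exfalso; move: h; apply/eqP.
  by rewrite gt_eqF // prodr_gt0 // => j _; rewrite powR_gt0.
by rewrite mu1 => /eqP; rewrite oner_eq0.
Qed.

Lemma agree0 (s tau : config n) : agree finset.set0 s tau.
Proof. by apply/forall_inP => j; rewrite inE. Qed.

Lemma marg0 (s : config n) : marg mu finset.set0 s = 1.
Proof. by rewrite /marg -mu1; apply: eq_bigl => tau; rewrite agree0. Qed.

Lemma cond0 (s : config n) b : cond_marg mu finset.set0 s i b = marg1 mu i b.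
Proof. by rewrite /cond_marg marg0 divr1; apply: eq_bigl => tau; rewrite agree0. Qed.

Lemma numL (s : config n) b : s i = false ->
  \sum_(tau : config n | agree [set~ i] s tau && (tau i == b)) mu tau =
  mu (if b then flip s else s).
Proof.
move=> si; apply: big_pred1 => tau /=; apply/idP/eqP.
  move=> /andP[/forall_inP H /eqP ti]; apply/ffunP => j.
  have [->|ne] := eqVneq j i.
    by rewrite ti; case: b ti; rewrite ?flip_i si.
  have := H j; rewrite in_setC1 ne => /(_ isT) /eqP ->.
  by case: b ti => _ //; rewrite ffunE (negbTE ne).
move=> ->; apply/andP; split.
  apply/forall_inP => j; rewrite in_setC1 => ne.
  by case: b => //; rewrite ffunE (negbTE ne).
by case: b; rewrite ?flip_i si.
Qed.

Lemma margL (s : config n) : s i = false -> marg mu [set~ i] s = mu (flip s) + mu s.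
Proof.
move=> si; rewrite /marg (bigID (fun tau : config n => tau i)) /=.
rewrite -(numL s true si) -(numL s false si); congr (_ + _).
  by apply: eq_bigl => tau; rewrite eqb_id.
by apply: eq_bigl => tau; rewrite eqbF_neg.
Qed.

Lemma stab_pt zeta (s : config n) : 0 <= zeta -> marginally_stable zeta mu -> s i = false ->
  mu (flip s) * marg1 mu i false <= zeta * marg1 mu i true * mu s.
Proof.
move=> z0 st si.
have [m0|m0] := ltP 0 (marg mu [set~ i] s).
  have iL : i \notin [set~ i] by rewrite !inE eqxx.
  have [_ ] := st i finset.set0 [set~ i] s (finset.sub0set _) iL m0.
  rewrite !cond0 /cond_marg (numL s true si) (numL s false si) /=.
  set m := marg mu [set~ i] s => h.
  have mn : m != 0 by rewrite gt_eqF.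
  have : mu (flip s) / m * marg1 mu i false * m <= zeta * (marg1 mu i true * (mu s / m)) * m.
    by apply: ler_wpM2r => //; apply: ltW.
  have e1 : mu (flip s) / m * marg1 mu i false * m = mu (flip s) * marg1 mu i false.
    by field.
  have e2 : zeta * (marg1 mu i true * (mu s / m)) * m = zeta * marg1 mu i true * mu s.
    by field.
  by rewrite e1 e2.
move: m0; rewrite margL // => m0.
have h1 := mu0 (flip s); have h2 := mu0 s.
have e1 : mu (flip s) = 0 by lra.
have e2 : mu s = 0 by lra.
by rewrite e1 e2 !mul0r mulr0.
Qed.

Lemma key_ineq zeta : 0 <= zeta -> marginally_stable zeta mu ->
  Bc * marg1 mu i false <= zeta * marg1 mu i true * Ac.
Proof.
move=> z0 st.
have -> : Bc = \sum_(s : config n) (if s i then 0 else mu (flip s) * Wc s).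
  rewrite /Bc (reindex_inj (can_inj flipK)) /=; apply: eq_bigr => s _.
  by rewrite flip_i Wc_flip; case: (s i).
rewrite /Ac mulr_suml mulr_sumr; apply: ler_sum => s _.
case si: (s i); first by rewrite mul0r mulr0.
have h := stab_pt zeta s z0 st si.
rewrite mulrAC mulrA; apply: ler_wpM2r; first exact: Wc_ge0.
exact: h.
Qed.

End Comb.

Theorem lemma5p3 (R : realType) (n : nat) (zeta : R) (mu : config n -> R) :
  1 < zeta -> is_distribution mu -> marginally_stable zeta mu ->
  forall (alpha : R) (x : 'I_n -> R) (i : 'I_n),
    0 < alpha < 1 -> (forall j, 0 < x j) ->
    powR (2 * zeta) (1 - alpha)^-1 <= x i ->
    derivable (fun t => Fma mu alpha (upd x i t)) (x i) 1 /\
    derive1 (fun t => Fma mu alpha (upd x i t)) (x i) <= 0.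
Proof.
move=> z1 [mu0 mu1] st al x i /andP[al0 al1] xpos hx.
have z0 : 0 <= zeta by apply: ltW; apply: lt_trans z1.
set A := @Ac R n mu i x al. set B := @Bc R n mu i x al. set C := @Cc R n mu i x.
set p := marg1 mu i true. set q := marg1 mu i false.
have E : (fun t => Fma mu al (upd x i t)) =
    (fun t => powR (A + powR t al * B) al^-1 / ((p * t + q) * C)).
  by apply/funext => t; rewrite Fma_upd.
rewrite E.
have G0 : 0 < A + powR (x i) al * B.
  by rewrite /A /B -gen_upd upd_id; apply: gen_gt0.
have D0 : 0 < (p * x i + q) * C.
  apply: mulr_gt0; first by apply: lin_gt0 => //; rewrite ?marg1_ge0 ?marg1_sum.
  exact: Cc_gt0.
have D := @deriv_main R A B C p q al (x i) al0 (xpos i) G0 D0.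
split; first by case: D.
rewrite derive1E derive_val.
apply: (@sign_main R A B C p q al (x i) zeta) => //; first by rewrite al0 al1.
- exact: Ac_ge0.
- exact: Bc_ge0.
- exact: Cc_gt0.
- exact: marg1_ge0.
- exact: marg1_ge0.
- exact: key_ineq.
Qed.
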